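(* Assume the setting described in the context and suppose the event $\mathcal{E}$ holds. Let $p\in\{1,\dots,k-1\}$, let $S^{(p)}\subseteq[n]$ with $|S^{(p)}|=p$, let $\hat{\mathbf{e}}^{(p)}$ be a unit eigenvector for the largest eigenvalue of $\hat{\boldsymbol{\Gamma}}_{S^{(p)},S^{(p)}}$ zero-padded to $\mathbb{R}^n$, assume $\langle\mathbf{v},\hat{\mathbf{e}}^{(p)}\rangle\neq0$, and let $S^{(p+1)}$ be the index set of the $p+1$ largest entries of $|\hat{\boldsymbol{\Gamma}}\hat{\mathbf{e}}^{(p)}|$. Then $$ \|\mathbf{v}_{S^{(p+1)}}\|_2\ \ge\ \sqrt{\frac{1}{s(p+1)}}-\frac{2}{\theta|\langle\mathbf{v},\hat{\mathbf{e}}^{(p)}\rangle|}\cdot C_0(1+\theta)\sqrt{\frac{2(p+1)\log n}{m}}, $$ where $C_0$ is the constant in the definition of $\mathcal{E}$.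
   Context: Let $n\ge 2$, $m\ge1$, $\theta>0$, $k\in[n]$; $\mathbf{v}\in\mathbb{R}^n$ a unit vector with at most $k$ nonzero entries; $\mathbf{x}_1,\dots,\mathbf{x}_m$ i.i.d. $\mathcal{N}(\mathbf{0},\mathbf{I}_n+\theta\mathbf{v}\mathbf{v}^\top)$; $\hat{\boldsymbol{\Gamma}}=\frac1m\sum_i\mathbf{x}_i\mathbf{x}_i^\top-\mathbf{I}_n$; $\mathbf{W}=\hat{\boldsymbol{\Gamma}}-\theta\mathbf{v}\mathbf{v}^\top$. $\mathbf{v}_S$ is the restriction of $\mathbf{v}$ to $S$, $\mathbf{A}_{S,S}$ a principal submatrix, $\|\cdot\|_2$ Euclidean/spectral norm. $v_{(1)}\ge v_{(2)}\ge\cdots$ are the sorted absolute entries of $\mathbf{v}$ and $s(p)=(\sum_{i=1}^pv_{(i)}^2)^{-1}$ for $1\le p\le k$. Fix an absolute constant $C_0>0$; $\mathcal{E}$ is the event that $\|\mathbf{W}_{S,S}\|_2\le C_0(1+\theta)\sqrt{|S|\log n/m}$ for all nonempty $S\subseteq[n]$. *)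

(* Defs.v *)
From HB Require Import structures.
From mathcomp Require Import all_boot all_order all_algebra.
From mathcomp Require Import all_classical all_reals all_analysis.
Set Implicit Arguments. Unset Strict Implicit. Unset Printing Implicit Defensive.
Import Order.TTheory GRing.Theory Num.Theory.
Local Open Scope ring_scope.

Section Defs.
Variable R : realType.

Definition vnorm (k : nat) (u : 'cV[R]_k) : R :=
  Num.sqrt (\sum_(i < k) u i 0 ^+ 2).

Definition opnorm (k : nat) (A : 'M[R]_k) : R :=
  sup [set vnorm (A *m u) | u in [set u : 'cV[R]_k | vnorm u = 1]]%classic.

Definition subm (n : nat) (S : {set 'I_n}) (A : 'M[R]_n) : 'M[R]_#|S| :=
  \matrix_(i, j) A (enum_val i) (enum_val j).

Definition subv (n : nat) (S : {set 'I_n}) (u : 'cV[R]_n) : 'cV[R]_#|S| :=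
  \col_i u (enum_val i) 0.

Definition sorted_abs (n : nat) (v : 'cV[R]_n) : seq R :=
  sort (fun a b : R => b <= a) [seq `|v i 0| | i <- enum 'I_n].

Definition s_fun (n : nat) (v : 'cV[R]_n) (p : nat) : R :=
  (\sum_(i < p) (nth 0 (sorted_abs v) i) ^+ 2)^-1.

Definition Gamma_hat (n m : nat) (x : 'I_m -> 'cV[R]_n) : 'M[R]_n :=
  (m%:R)^-1 *: (\sum_(i < m) (x i *m (x i)^T)) - 1%:M.

Definition W_mat (n m : nat) (x : 'I_m -> 'cV[R]_n) (theta : R) (v : 'cV[R]_n)
  : 'M[R]_n := Gamma_hat x - theta *: (v *m v^T).

Definition event_E (n m : nat) (x : 'I_m -> 'cV[R]_n) (theta : R)
  (v : 'cV[R]_n) (C0 : R) : Prop :=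
  forall S : {set 'I_n}, S != finset.set0 ->
    opnorm (subm S (W_mat x theta v)) <=
      C0 * (1 + theta) * Num.sqrt (#|S|%:R * ln (n%:R) / m%:R).

Definition inner (n : nat) (u w : 'cV[R]_n) : R := \sum_(i < n) u i 0 * w i 0.

Definition vsupp (n : nat) (u : 'cV[R]_n) : {set 'I_n} :=
  finset.finset (fun i : 'I_n => u i 0 != 0).

End Defs.

(* Main.v *)
Require Import Defs.
From HB Require Import structures.
From mathcomp Require Import all_boot all_order all_algebra.
From mathcomp Require Import all_classical all_reals all_analysis.
From mathcomp Require Import ring lra zify.
Set Implicit Arguments. Unset Strict Implicit. Unset Printing Implicit Defensive.
Import Order.TTheory GRing.Theory Num.Theory.
Local Open Scope ring_scope.

Section Helpers.
Variable R : realType.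

Lemma CS (I : Type) (r : seq I) (P : pred I) (a b : I -> R) :
  (\sum_(i <- r | P i) a i * b i) ^+ 2 <=
  (\sum_(i <- r | P i) a i ^+ 2) * (\sum_(i <- r | P i) b i ^+ 2).
Proof.
set A := \sum_(i <- r | P i) a i ^+ 2.
set B := \sum_(i <- r | P i) b i ^+ 2.
set C := \sum_(i <- r | P i) a i * b i.
have inner i : \sum_(j <- r | P j) (a i * b j - a j * b i) ^+ 2 =
   B * a i ^+ 2 + A * b i ^+ 2 - C * (2 * (a i * b i)).
  rewrite /A /B /C !mulr_suml -big_split -sumrB /=.
  by apply: eq_bigr => j _; ring.
have E : \sum_(i <- r | P i) \sum_(j <- r | P j) (a i * b j - a j * b i) ^+ 2
   = B * A + A * B - C * (2 * C).
  rewrite (eq_bigr _ (fun i _ => inner i)) sumrB big_split /=.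
  by rewrite -!mulr_sumr.
have H0 : 0 <= \sum_(i <- r | P i) \sum_(j <- r | P j) (a i * b j - a j * b i) ^+ 2.
  by apply: sumr_ge0 => i _; apply: sumr_ge0 => j _; apply: sqr_ge0.
rewrite E in H0. nra.
Qed.

Lemma sqrt_le_of (X s : R) : 0 <= s -> X <= s ^+ 2 -> Num.sqrt X <= s.
Proof.
move=> s0 Xs; rewrite -(ger0_norm s0) -sqrtr_sqr; exact: ler_wsqrtr.
Qed.

Definition nrm (I : finType) (U : {set I}) (f : I -> R) :=
  Num.sqrt (\sum_(i in U) f i ^+ 2).

Lemma nrm_ge0 (I : finType) U (f : I -> R) : 0 <= nrm U f.
Proof. exact: sqrtr_ge0. Qed.

Lemma nrm_triangle (I : finType) U (f h : I -> R) :
  nrm U (fun i => f i + h i) <= nrm U f + nrm U h.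
Proof.
rewrite /nrm; set A := \sum_(i in U) f i ^+ 2; set B := \sum_(i in U) h i ^+ 2.
have A0 : 0 <= A by apply: sumr_ge0 => i _; apply: sqr_ge0.
have B0 : 0 <= B by apply: sumr_ge0 => i _; apply: sqr_ge0.
apply: sqrt_le_of; first by rewrite addr_ge0 // sqrtr_ge0.
have cs := CS (index_enum I) (fun i => i \in U) f h.
rewrite -/A -/B in cs.
set C := \sum_(i in U) f i * h i in cs.
have -> : \sum_(i in U) (f i + h i) ^+ 2 = A + B + 2 * C.
  rewrite /A /B /C mulr_sumr -!big_split /=; apply: eq_bigr => i _; ring.
have sA := sqr_sqrtr A0; have sB := sqr_sqrtr B0.
have pA := sqrtr_ge0 A; have pB := sqrtr_ge0 B.
set a := Num.sqrt A in sA pA *; set b := Num.sqrt B in sB pB *.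
have : C <= a * b.
  rewrite -sA -sB in cs.
  have ab0 : 0 <= a * b by apply: mulr_ge0.
  nra.
nra.
Qed.

Lemma nrm_scale (I : finType) U (f : I -> R) c :
  nrm U (fun i => c * f i) = `|c| * nrm U f.
Proof.
rewrite /nrm -sqrtr_sqr -sqrtrM ?sqr_ge0 // mulr_sumr.
by congr Num.sqrt; apply: eq_bigr => i _; rewrite exprMn.
Qed.

Lemma nrm_opp (I : finType) U (f : I -> R) :
  nrm U (fun i => - f i) = nrm U f.
Proof. by rewrite /nrm; congr Num.sqrt; apply: eq_bigr => i _; rewrite sqrrN. Qed.

Lemma nrm_sub (I : finType) (U V : {set I}) (f : I -> R) :
  U \subset V -> nrm U f <= nrm V f.
Proof.
move=> UV; rewrite /nrm; apply: ler_wsqrtr.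
rewrite [X in _ <= X](big_setID U) /= (finset.setIidPr UV) lerDl.
by apply: sumr_ge0 => i _; apply: sqr_ge0.
Qed.


Lemma vnorm_subv n (U : {set 'I_n}) (u : 'cV[R]_n) :
  vnorm (subv U u) = nrm U (fun i => u i 0).
Proof.
rewrite /vnorm /nrm (big_enum_val (fun i => u i 0 ^+ 2)) /=.
by congr Num.sqrt; apply: eq_bigr => i _; rewrite mxE.
Qed.

Lemma vnorm_scale k (u : 'cV[R]_k) c : vnorm (c *: u) = `|c| * vnorm u.
Proof.
rewrite /vnorm -sqrtr_sqr -sqrtrM ?sqr_ge0 // mulr_sumr.
by congr Num.sqrt; apply: eq_bigr => i _; rewrite mxE exprMn.
Qed.

Lemma frob k (A : 'M[R]_k) (w : 'cV[R]_k) :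
  vnorm (A *m w) <= Num.sqrt (\sum_(i < k) \sum_(j < k) A i j ^+ 2) * vnorm w.
Proof.
rewrite /vnorm -sqrtrM; last by apply: sumr_ge0 => i _; apply: sumr_ge0 => j _; apply: sqr_ge0.
apply: ler_wsqrtr; rewrite mulr_suml; apply: ler_sum => i _.
rewrite mxE; exact: CS.
Qed.

Lemma opnorm_bound k (A : 'M[R]_k) (u : 'cV[R]_k) :
  vnorm (A *m u) <= opnorm A * vnorm u.
Proof.
set F := Num.sqrt (\sum_(i < k) \sum_(j < k) A i j ^+ 2).
have hub : has_ubound [set vnorm (A *m u) | u in [set u : 'cV[R]_k | vnorm u = 1]]%classic.
  exists F => y [w /= w1 <-]; have := frob A w; by rewrite w1 mulr1.
have [u0|unz] := eqVneq (vnorm u) 0.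
  have := frob A u; rewrite u0 mulr0 => h.
  by apply: (le_trans h); rewrite mulr0.
have up : 0 < vnorm u by rewrite lt0r unz sqrtr_ge0.
set u' := (vnorm u)^-1 *: u.
have u'1 : vnorm u' = 1 by rewrite vnorm_scale ger0_norm ?invr_ge0 ?(ltW up) // mulVf.
have : vnorm (A *m u') <= opnorm A.
  by apply: (ub_le_sup hub); exists u'.
rewrite /u' -scalemxAr vnorm_scale ger0_norm ?invr_ge0 ?(ltW up) //.
by rewrite ler_pdivrMl // mulrC.
Qed.

Lemma top_sum (I : finType) (A B : {set I}) (f : I -> R) :
  #|A| = #|B| -> (forall i j, i \in A -> j \notin A -> f j <= f i) ->
  \sum_(i in B) f i <= \sum_(i in A) f i.
Proof.
move=> cAB top.
rewrite (big_setID A) [X in _ <= X](big_setID B) /= finset.setIC lerD2l.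
have cD : #|B :\: A| = #|A :\: B|.
  by rewrite !cardsD cAB finset.setIC.
have key : (\sum_(i in B :\: A) f i) *+ #|A :\: B| <= (\sum_(i in A :\: B) f i) *+ #|B :\: A|.
  rewrite -sumr_const -sumrMnl; apply: ler_sum => i; rewrite inE => /andP [iB iA].
  rewrite -sumr_const; apply: ler_sum => j; rewrite inE => /andP [jA jB].
  exact: top.
rewrite cD in key.
case: (posnP #|A :\: B|) => [c0|cp]; last by rewrite ler_pMn2r in key.
have e1 : A :\: B = finset.set0 by apply/eqP; rewrite -cards_eq0 c0.
have e2 : B :\: A = finset.set0 by apply/eqP; rewrite -cards_eq0 cD c0.
by rewrite e1 e2 !big_set0.
Qed.

Lemma tstar n (v : 'cV[R]_n) q : (0 < n)%N -> (q <= n)%N ->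
  exists Ts : {set 'I_n}, #|Ts| = q /\
    \sum_(i < q) (nth 0 (sorted_abs v) i) ^+ 2 = \sum_(i in Ts) v i 0 ^+ 2.
Proof.
move=> n0 qn.
pose x0 : 'I_n := Ordinal n0.
pose fv := fun i : 'I_n => `|v i 0|.
pose idx := sort (fun i j : 'I_n => fv j <= fv i) (enum 'I_n).
have sidx : size idx = n by rewrite size_sort size_enum_ord.
have uidx : uniq idx by rewrite sort_uniq enum_uniq.
have hs : sorted_abs v = map fv idx by rewrite /sorted_abs sort_map.
have st : size (take q idx) = q by rewrite size_takel // sidx.
exists [set i in take q idx]; split.
  by rewrite cardsE; move/card_uniqP: (take_uniq q uidx) => ->.
rewrite (eq_bigl (fun i => i \in take q idx)); last by move=> i; rewrite inE.
rewrite -big_uniq ?take_uniq // (big_nth x0) st big_mkord hs.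
apply: eq_bigr => j _.
rewrite (nth_map x0) ?sidx ?(leq_trans (ltn_ord j) qn) // nth_take //.
by rewrite /fv real_normK // num_real.
Qed.


Lemma subm_mul n (V : {set 'I_n}) (M : 'M[R]_n) (e : 'cV[R]_n) ii :
  (forall j, j \notin V -> e j 0 = 0) ->
  (subm V M *m subv V e) ii 0 = (M *m e) (enum_val ii) 0.
Proof.
move=> eV; rewrite !mxE.
have hj : forall j, subm V M ii j * subv V e j 0 = M (enum_val ii) (enum_val j) * e (enum_val j) 0 by move=> j; rewrite !mxE.
rewrite (eq_bigr _ (fun j _ => hj j)).
rewrite -(big_enum_val (fun j => M (enum_val ii) j * e j 0)) /=.
rewrite big_mkcond /=; apply: eq_bigr => j _; case: ifP => // /negbT jV.
by rewrite eV ?mulr0.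
Qed.

Lemma nrm_ext (I : finType) U (f h : I -> R) : f =1 h -> nrm U f = nrm U h.
Proof. by move=> fh; rewrite /nrm; congr Num.sqrt; apply: eq_bigr => i _; rewrite fh. Qed.

End Helpers.

Theorem lemma4 (R : realType) (n m k p : nat) (theta C0 : R)
  (v : 'cV[R]_n) (x : 'I_m -> 'cV[R]_n)
  (S : {set 'I_n}) (e : 'cV[R]_n) (lam : R) (T : {set 'I_n}) :
  (2 <= n)%N -> (1 <= m)%N -> 0 < theta -> (1 <= k <= n)%N -> 0 < C0 ->
  vnorm v = 1 -> (#|vsupp v| <= k)%N ->
  event_E x theta v C0 ->
  (1 <= p)%N -> (p <= k - 1)%N ->
  #|S| = p ->
  (* e-hat^(p): unit top eigenvector of Gamma-hat_{S,S}, zero-padded *)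
  (forall i, i \notin S -> e i 0 = 0) ->
  vnorm e = 1 ->
  subm S (Gamma_hat x) *m subv S e = lam *: subv S e ->
  (forall mu, eigenvalue (subm S (Gamma_hat x)) mu -> mu <= lam) ->
  inner v e != 0 ->
  (* S^(p+1): indices of the p+1 largest entries of |Gamma-hat e-hat| *)
  #|T| = p.+1 ->
  (forall i j, i \in T -> j \notin T ->
     `|(Gamma_hat x *m e) j 0| <= `|(Gamma_hat x *m e) i 0|) ->
  vnorm (subv T v) >=
    Num.sqrt ((s_fun v p.+1)^-1)
    - 2 / (theta * `|inner v e|) * (C0 * (1 + theta)
        * Num.sqrt (2 * p.+1%:R * ln (n%:R) / m%:R)).
Proof.
move=> n2 m1 th0 /andP[k1 kn] C00 vn1 supp E p1 pk cS eS en1 _ _ ive cT topT.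
set W := W_mat x theta v.
pose w := fun i => (W *m e) i 0.
pose g := fun i => (Gamma_hat x *m e) i 0.
set a := theta * inner v e.
have gE : forall i, g i = a * v i 0 + w i.
  move=> i.
  have vvE : ((v *m v^T) *m e) i 0 = v i 0 * inner v e.
    rewrite !mxE /inner mulr_sumr; apply: eq_bigr => j _.
    by rewrite !mxE big_ord1 !mxE mulrA.
  have vvE2 : (- (theta *: (v *m v^T *m e))) i 0 = - (theta * (v i 0 * inner v e)) by rewrite -vvE !mxE.
  rewrite /w /W /W_mat mulmxBl mxE -scalemxAl vvE2 /a /g; ring.
set eps := C0 * (1 + theta) * Num.sqrt (2 * p.+1%:R * ln (n%:R) / m%:R).
have Wb : forall U : {set 'I_n}, #|U| = p.+1 -> nrm U w <= eps.
  move=> U cU; set V := U :|: S.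
  have cUV : (#|U| <= #|V|)%N by apply: subset_leq_card; apply: finset.subsetUl.
  have Vn0 : V != finset.set0 by rewrite -cards_eq0 -lt0n (leq_trans _ cUV) // cU.
  have hE := E V Vn0.
  have step1 : nrm U w <= nrm V w by apply: nrm_sub; apply: finset.subsetUl.
  have step2 : nrm V w = vnorm (subm V W *m subv V e).
    rewrite /vnorm /nrm (big_enum_val (fun i => w i ^+ 2)) /=.
    congr Num.sqrt; apply: eq_bigr => ii _; congr (_ ^+ 2).
    rewrite /w subm_mul // => j jV; apply eS; move: jV; apply: contra => jS; rewrite inE jS orbT.
    done.
  have step3 : vnorm (subv V e) = 1.
    rewrite vnorm_subv /nrm -en1 /vnorm; congr Num.sqrt.
    rewrite big_mkcond /=; apply: eq_bigr => i _; case: ifP => // /negbT iV.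
    rewrite eS ?expr2 ?mulr0 //; move: iV; apply: contra => iS; rewrite inE iS orbT.
    done.
  have step4 := opnorm_bound (subm V W) (subv V e).
  rewrite step3 mulr1 -step2 in step4.
  apply: (le_trans step1); apply: (le_trans step4); apply: (le_trans hE).
  rewrite /eps; apply: ler_wpM2l.
    by apply: mulr_ge0; [exact: ltW | rewrite addr_ge0 // ltW].
  apply: ler_wsqrtr; apply: ler_wpM2r; first by rewrite invr_ge0 ler0n.
  apply: ler_wpM2r; first by apply: ln_ge0; rewrite ler1n (leq_trans _ n2).
  rewrite -natrM ler_nat.
  have : (#|V| <= #|U| + #|S|)%N by rewrite cardsU leq_subr.
  rewrite cU cS => h; apply: (leq_trans h); lia.
have n0 : (0 < n)%N by apply: leq_trans n2.
have pn : (p.+1 <= n)%N.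
  apply: leq_trans kn; rewrite -(subnK k1) addn1 ltnS; exact: pk.
have [Ts [cTs hTs]] := tstar v n0 pn.
have Xe : Num.sqrt ((s_fun v p.+1)^-1) = nrm Ts (fun i => v i 0) by rewrite /s_fun invrK hTs.
rewrite Xe vnorm_subv -/eps.
have topg : nrm Ts g <= nrm T g.
  apply: ler_wsqrtr; apply: top_sum; first by rewrite cT cTs.
  move=> i j iT jT; have := topT i j iT jT; rewrite -/(g i) -/(g j) => h.
  rewrite -(real_normK (num_real (g i))) -(real_normK (num_real (g j))).
  have := normr_ge0 (g j); nra.
have h1 : nrm T g <= nrm T (fun i => a * v i 0) + nrm T w.
  rewrite (nrm_ext _ gE); exact: nrm_triangle.
have h2 : nrm Ts (fun i => a * v i 0) <= nrm Ts g + nrm Ts w.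
  rewrite -[X in _ <= _ + X](nrm_opp Ts w).
  rewrite (@nrm_ext _ _ _ _ (fun i => g i + - w i)); first exact: nrm_triangle.
  by move=> i; rewrite gE; ring.
rewrite !nrm_scale in h1 h2.
have w1 := Wb T cT; have w2 := Wb Ts cTs.
have aE : `|a| = theta * `|inner v e| by rewrite /a normrM gtr0_norm.
have ap : 0 < theta * `|inner v e| by rewrite mulr_gt0 // normr_gt0.
rewrite aE in h1 h2.
set P := theta * `|inner v e| in h1 h2 ap *.
set X := nrm Ts _ in h2 *; set Y := nrm T _ in h1 *.
have -> : X - 2 / P * eps = P^-1 * (P * X - 2 * eps).
  by field; rewrite gt_eqF.
rewrite ler_pdivrMl //.
move: h1 h2 topg w1 w2; set Z := P * nrm T _; set Q := P * X; move=> h1 h2 topg w1 w2; rewrite /Y in h1; lra.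
Qed.
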